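(* Let $A\subseteq\Theta$ be a Borel set with $\Theta_0^\delta\subseteq A$ for some $\delta>0$, and suppose $(\mathcal{H},L)$ has the strong uniform convergence property with respect to $\mathcal{D}$, with strong uniform convergence function $f$. Let $\alpha>0$. Suppose one of the following holds: (a) the risk minimizer $\theta_0\in\arg\min_\Theta R$ exists, an empirical risk minimizer $\widehat{\theta}_S\in\arg\min_\Theta\widehat{R}_S$ exists for every sample $S$, and $\varepsilon(m,\alpha):=\inf\{\varepsilon>0\mid m\ge f(\varepsilon/2,\alpha)\}$; (b) $\varepsilon(m,\alpha):=\inf\{\varepsilon>0\mid m\ge\inf_{0<\delta'<\varepsilon}f((\varepsilon-\delta')/2,\alpha)\}$. Then $$\liminf_{m\to\infty}\Pr_{S\sim\mathcal{D}^m}\big[\mathrm{pl}^{\mathrm{boot},S}_{\varepsilon(m,\alpha)}(A)\ge1-\alpha\big]\ge1-\alpha.$$ Moreover, $\Pr_{S\sim\mathcal{D}^m}[\mathrm{pl}^{\mathrm{boot},S}_{\varepsilon(m,\alpha)}(A)\ge1-\alpha]\ge1-\alpha$ holds for every $m$ with $\varepsilon(m,\alpha)\le\delta$ in case (a), and for every $m$ with $\varepsilon(m,\alpha)\le\delta/2$ in case (b).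
   Context: Setting: data are i.i.d. from a distribution $\mathcal{D}$ on $\mathcal{X}\times\mathcal{Y}$; $\mathcal{H}=\{x\mapsto h(x;\theta)\mid\theta\in\Theta\}$ with $\Theta$ a topological space, $L:\mathcal{Y}\times\mathcal{Y}\to\mathbb{R}$ a loss. For a distribution $\widetilde{\mathcal{D}}$ on $\mathcal{X}\times\mathcal{Y}$ write $R_{\widetilde{\mathcal{D}}}(\theta)=\mathbb{E}_{\widetilde{\mathcal{D}}}[L(h(X;\theta),Y)]$ and $R=R_{\mathcal{D}}$ (assumed finite); for a sample $S=((X_i,Y_i))_{i=1}^m$, $\widehat{R}_S(\theta)=\frac1m\sum_{i=1}^mL(h(X_i;\theta),Y_i)$. All events are assumed measurable. $\widehat{\Theta}_S^\varepsilon=\{\theta\mid\widehat{R}_S(\theta)\le\inf_\vartheta\widehat{R}_S(\vartheta)+\varepsilon\}$, $\Theta_0^\delta=\{\theta\mid R(\theta)\le\inf_\vartheta R(\vartheta)+\delta\}$. Strong uniform convergence property: there is $w:\mathbb{R}^+\times\mathbb{R}^+\to\mathbb{R}$ (a ''witness'') such that for all $\varepsilon,\alpha>0$ and integers $m\ge w(\varepsilon,\alpha)$: (1) $\Pr_{S\sim\mathcal{D}^m}[\sup_\theta|R(\theta)-\widehat{R}_S(\theta)|\le\varepsilon]\ge1-\alpha$, and (2) $\inf_{\widetilde{\mathcal{D}}\in\mathcal{B}_m}\Pr_{S'\sim\widetilde{\mathcal{D}}^m}[\sup_\theta|R_{\widetilde{\mathcal{D}}}(\theta)-\widehat{R}_{S'}(\theta)|\le\varepsilon]\ge1-\alpha$,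 where $\mathcal{B}_m$ is the set of bootstrap resampling distributions, i.e. the empirical (uniform) distributions $\mathrm{Unif}(S)$ on the points of $S$ for every possible realization $S$ of $\mathcal{D}^m$. The strong uniform convergence function is $f(\varepsilon,\alpha)=\inf_w\lceil w(\varepsilon,\alpha)\rceil$ over all such witnesses. Bootstrapped plausibility: for an observed sample $S$ of size $m$, $\mathrm{pl}^{\mathrm{boot},S}_\varepsilon(A)=\Pr_{S'\sim\mathrm{Unif}(S)^m}[\widehat{\Theta}_{S'}^\varepsilon\cap A\ne\varnothing\mid\widehat{\Theta}_{S'}^\varepsilon\ne\varnothing]$ (the almost-sure limit of $\frac1B\sum_{i=1}^BI(\widehat{\Theta}_{S_i}^\varepsilon\cap A\neq\varnothing)$ over independent resamples $S_i$ with nonempty $\widehat{\Theta}_{S_i}^\varepsilon$), assumed well defined. *)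

(* Defs.v *)
From HB Require Import structures.
From mathcomp Require Import all_boot all_order all_algebra.
From mathcomp Require Import all_classical all_reals all_analysis.
Set Implicit Arguments.
Unset Strict Implicit.
Unset Printing Implicit Defensive.
Import Order.TTheory GRing.Theory Num.Theory.
Local Open Scope classical_set_scope.
Local Open Scope ring_scope.

Definition borel_set (T : topologicalType) (A : set T) : Prop := <<s open >> A.

(* Independence: product rule for every finite subfamily (the indices
   < n, other sets may be taken to be setT). *)
Definition iid_seq (R : realType) (dO dT : measure_display)
  (Omega : measurableType dO) (T : measurableType dT)
  (P : probability Omega R) (D : probability T R) (Z : nat -> Omega -> T) :=
  [/\ (forall i, measurable_fun setT (Z i)),
      (forall i (B : set T), measurable B -> P (Z i @^-1` B) = D B) &
      (forall n (B : nat -> set T), (forall i, measurable (B i)) ->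
         P (\bigcap_(i in `I_n) (Z i @^-1` B i)) =
         (\prod_(i < n) fine (P (Z i @^-1` B i)))%:E)].

Definition sample (Omega T : Type) (Z : nat -> Omega -> T) (m : nat)
  (w : Omega) : 'I_m -> T := fun i => Z (nat_of_ord i) w.
Arguments sample {Omega T} Z m w.

Definition resample (T : Type) (m : nat) (S : 'I_m -> T)
  (idx : {ffun 'I_m -> 'I_m}) : 'I_m -> T := fun i => S (idx i).

Section Risks.
Context (R : realType) (dX dY : measure_display)
  (X : measurableType dX) (Y : measurableType dY) (Theta : Type)
  (h : X -> Theta -> Y) (L : Y -> Y -> R).

Definition emp_risk (m : nat) (S : 'I_m -> X * Y) (th : Theta) : R :=
  m%:R^-1 * \sum_(i < m) L (h (S i).1 th) (S i).2.

Definition risk (D : probability (X * Y)%type R) (th : Theta) : \bar R :=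
  (\int[D]_z (L (h z.1 th) z.2)%:E)%E.

Definition erm_set (m : nat) (S : 'I_m -> X * Y) (eps : \bar R) : set Theta :=
  [set th | ((emp_risk S th)%:E <=
             ereal_inf (range (fun t => (emp_risk S t)%:E)) + eps)%E].

Definition risk_set (D : probability (X * Y)%type R) (delta : R) : set Theta :=
  [set th | (risk D th <= ereal_inf (range (risk D)) + delta%:E)%E].

(* Probability of an event under Unif(S)^m: resamples are the m^m index maps. *)
Definition boot_prob (m : nat) (Q : {ffun 'I_m -> 'I_m} -> Prop) : R :=
  #|[set idx : {ffun 'I_m -> 'I_m} | `[< Q idx >] ]|%:R
  / #|{ffun 'I_m -> 'I_m}|%:R.

(* bootstrapped plausibility pl^{boot,S}_eps(A): conditional probability under
   Unif(S)^m (ratio of counts) *)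
Definition pl_boot (m : nat) (S : 'I_m -> X * Y) (eps : \bar R) (A : set Theta) : R :=
  #|[set idx : {ffun 'I_m -> 'I_m} |
       `[< erm_set (resample S idx) eps `&` A !=set0 >] ]|%:R
  / #|[set idx : {ffun 'I_m -> 'I_m} |
       `[< erm_set (resample S idx) eps !=set0 >] ]|%:R.

Definition unif_dev (D : probability (X * Y)%type R) (m : nat)
  (S : 'I_m -> X * Y) (eps : R) : Prop :=
  (ereal_sup (range (fun th => `| risk D th - (emp_risk S th)%:E |)) <= eps%:E)%E.

(* same for the bootstrap distribution Unif(S): R_{Unif(S)} = \hat R_S *)
Definition boot_unif_dev (m : nat) (S S' : 'I_m -> X * Y) (eps : R) : Prop :=
  (ereal_sup (range (fun th => `| (emp_risk S th)%:E - (emp_risk S' th)%:E |))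
     <= eps%:E)%E.

Context (dO : measure_display) (Omega : measurableType dO)
  (P : probability Omega R) (D : probability (X * Y)%type R)
  (Z : nat -> Omega -> X * Y).

Definition suc_witness (w : R -> R -> R) : Prop :=
  forall eps alpha : R, 0 < eps -> 0 < alpha ->
  forall m : nat, (0 < m)%N -> w eps alpha <= m%:R ->
    (P [set om | unif_dev D (sample Z m om) eps] >= (1 - alpha)%:E)%E /\
    (forall S : 'I_m -> X * Y,
       boot_prob (fun idx => boot_unif_dev S (resample S idx) eps) >= 1 - alpha).

Definition strong_unif_conv : Prop := exists w, suc_witness w.

Definition suc_fun (eps alpha : R) : \bar R :=
  ereal_inf [set ((Num.ceil (w eps alpha))%:~R)%:E | w in suc_witness].

Definition eps_a (m : nat) (alpha : R) : \bar R :=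
  ereal_inf [set e%:E | e in [set e : R | 0 < e /\ (suc_fun (e / 2)%R alpha <= m%:R%:E)%E]].

Definition eps_b (m : nat) (alpha : R) : \bar R :=
  ereal_inf [set e%:E | e in [set e : R | 0 < e /\
    (ereal_inf [set suc_fun ((e - d) / 2)%R alpha | d in [set d : R | (0 < d < e)%R]]
       <= m%:R%:E)%E]].

Definition pl_event (m : nat) (eps : \bar R) (A : set Theta) (alpha : R) : set Omega :=
  [set om | pl_boot (sample Z m om) eps A >= 1 - alpha].

Definition pl_conclusion (eps : nat -> \bar R) (thr : R) (A : set Theta) (alpha : R) : Prop :=
  (limn_einf (fun m => P (pl_event m (eps m) A alpha)) >= (1 - alpha)%:E)%E /\
  (forall m : nat, (0 < m)%N -> (eps m <= thr%:E)%E ->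
     (P (pl_event m (eps m) A alpha) >= (1 - alpha)%:E)%E).

Definition pl_well_defined (eps : nat -> \bar R) (A : set Theta) (alpha : R) : Prop :=
  forall m : nat, (0 < m)%N ->
    (forall S : 'I_m -> X * Y, exists idx : {ffun 'I_m -> 'I_m},
       erm_set (resample S idx) (eps m) !=set0) /\
    measurable (pl_event m (eps m) A alpha).

End Risks.

(* Main.v *)
Require Import Defs.
Set Warnings "-all".
From HB Require Import structures.
From mathcomp Require Import all_boot all_order all_algebra.
From mathcomp Require Import all_classical all_reals all_analysis.
From mathcomp Require Import lra zify.
Import Order.TTheory GRing.Theory Num.Theory.
Local Open Scope classical_set_scope.
Local Open Scope ring_scope.
Set Implicit Arguments.
Unset Strict Implicit.
Section S1.
Variables (R : realType) (dX dY : measure_display) (X : measurableType dX)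
  (Y : measurableType dY) (Theta : Type) (h : X -> Theta -> Y) (L : Y -> Y -> R).
Local Notation emp := (emp_risk h L).

Lemma erm_lb m (S : 'I_m -> X * Y) r th :
  erm_set h L S r%:E th -> forall th', emp S th - r <= emp S th'.
Proof.
rewrite /erm_set /= => H th'.
have : ((emp S th - r)%:E <= ereal_inf (range (fun t => (emp S t)%:E)))%E.
  by rewrite EFinB leeBlDr.
by move/ereal_infP => /(_ (emp S th')%:E (ex_intro2 _ _ th' I erefl)); rewrite lee_fin.
Qed.

Lemma erm_mem m (S : 'I_m -> X * Y) r th :
  (forall th', emp S th - r <= emp S th') -> erm_set h L S r%:E th.
Proof.
move=> H; rewrite /erm_set /= -leeBlDr //; apply/ereal_infP => _ [t _ <-].
by rewrite -EFinB lee_fin.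
Qed.

Lemma rs_mem (D : probability (X * Y)%type R) d th :
  (forall t, risk h L D t \is a fin_num) ->
  (forall th', fine (risk h L D th) - d <= fine (risk h L D th')) ->
  risk_set h L D d th.
Proof.
move=> Hf H; rewrite /risk_set /= -leeBlDr //; apply/ereal_infP => _ [t _ <-].
by rewrite -(fineK (Hf th)) -(fineK (Hf t)) -EFinB lee_fin.
Qed.

Lemma devP (D : probability (X * Y)%type R) m (S : 'I_m -> X * Y) c :
  (forall t, risk h L D t \is a fin_num) ->
  unif_dev h L D S c <-> forall th, `|fine (risk h L D th) - emp S th| <= c.
Proof.
move=> Hf; rewrite /unif_dev; split.
  move/ereal_supP => H th.
  have := H _ (ex_intro2 _ _ th I erefl).
  by rewrite -(fineK (Hf th)) -EFinB abse_EFin lee_fin fineK.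
move=> H; apply/ereal_supP => _ [t _ <-].
by rewrite -(fineK (Hf t)) -EFinB abse_EFin lee_fin.
Qed.

Lemma bdevP m (S S' : 'I_m -> X * Y) c :
  boot_unif_dev h L S S' c <-> forall th, `|emp S th - emp S' th| <= c.
Proof.
rewrite /boot_unif_dev; split.
  move/ereal_supP => H th.
  by have := H _ (ex_intro2 _ _ th I erefl); rewrite -EFinB abse_EFin lee_fin.
move=> H; apply/ereal_supP => _ [t _ <-].
by rewrite -EFinB abse_EFin lee_fin.
Qed.

Lemma pl_core m (S : 'I_m -> X * Y) (e : \bar R) (A : set Theta) (alpha : R)
  (Q : {ffun 'I_m -> 'I_m} -> Prop) :
  (exists idx, erm_set h L (resample S idx) e !=set0) ->
  (forall idx, Q idx -> erm_set h L (resample S idx) e `&` A !=set0) ->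
  1 - alpha <= boot_prob R Q -> 1 - alpha <= pl_boot h L S e A.
Proof.
move=> [i0 Hi0] HQ HB; rewrite /pl_boot.
set num := [set idx | _ ]; set den := [set idx | _ ].
case: (lerP (1 - alpha) 0) => [le0|gt0].
  by apply: (le_trans le0); apply: divr_ge0; apply: ler0n.
have Hden : (0 < #|den|)%N by apply/card_gt0P; exists i0; rewrite inE; apply/asboolP.
have HN : (#|den| <= #|{ffun 'I_m -> 'I_m}|)%N by apply: max_card.
have HQn : (#|[set idx | `[< Q idx >] ]| <= #|num|)%N.
  apply: subset_leq_card; apply/fintype.subsetP => i; rewrite !inE => /asboolP Hq.
  by apply/asboolP; apply: HQ.
apply: (le_trans HB); rewrite /boot_prob.
have H0 : (0 : R) < #|den|%:R by rewrite ltr0n.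
apply: (@le_trans _ _ (#|num|%:R / #|{ffun 'I_m -> 'I_m}|%:R)).
  by apply: ler_wpM2r; [rewrite invr_ge0 ler0n | rewrite ler_nat].
apply: ler_wpM2l; first exact: ler0n.
rewrite lef_pV2 ?posrE ?ler_nat //.
by apply: (lt_le_trans H0); rewrite ler_nat.
Qed.
End S1.
Lemma near_min (R : realType) (T : Type) (f : T -> R) (b : R) (t0 : T) (eta : R) :
  (forall t, b <= f t) -> 0 < eta -> exists t, forall t', f t <= f t' + eta.
Proof.
move=> Hb He.
set i := ereal_inf (range (fun t => (f t)%:E)).
have Hlb : (b%:E <= i)%E by apply/ereal_infP => _ [t _ <-]; rewrite lee_fin.
have Hub : (i <= (f t0)%:E)%E by apply: ge_ereal_inf; exists (f t0)%:E => //; exists t0.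
have Hfin : i \is a fin_num.
  by rewrite fin_numE; apply/andP; split; apply/eqP => Hi; rewrite Hi in Hlb Hub.
have Hlt : (i < (fine i + eta)%:E)%E by by rewrite EFinD fineK // lteDl // lte_fin.
have [_ [t _ <-] Hy] := ereal_inf_lt Hlt.
exists t => t'.
have : (i <= (f t')%:E)%E by apply: ge_ereal_inf; exists (f t')%:E => //; exists t'.
rewrite -(fineK Hfin) lee_fin => H1.
move: Hy; rewrite lte_fin => H2.
by rewrite ltW // (lt_le_trans H2) // lerD2r.
Qed.

Section S2.
Variables (R : realType) (dX dY : measure_display) (X : measurableType dX)
  (Y : measurableType dY) (Theta : Type) (h : X -> Theta -> Y) (L : Y -> Y -> R)
  (D : probability (X * Y)%type R) (A : set Theta).
Local Notation emp := (emp_risk h L).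
Local Notation Rk t := (fine (risk h L D t)).
Hypothesis Hf : forall t, risk h L D t \is a fin_num.

Lemma good_a m (S S' : 'I_m -> X * Y) c r d thS :
  2 * c <= r -> r <= d -> risk_set h L D d `<=` A ->
  (forall th, `|Rk th - emp S th| <= c) ->
  (forall th, `|emp S th - emp S' th| <= c) ->
  (forall th, emp S thS <= emp S th) ->
  erm_set h L S' r%:E `&` A !=set0.
Proof.
move=> Hcr Hrd HA Hd Hb Hmin; exists thS; split.
  apply: erm_mem => th'.
  have := Hb thS; have := Hb th'; have := Hmin th'.
  rewrite !ler_norml => ? /andP[? ?] /andP[? ?]; lra.
apply: HA; apply: rs_mem => // th'.
have := Hd thS; have := Hd th'; have := Hmin th'.
rewrite !ler_norml => ? /andP[? ?] /andP[? ?]; lra.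
Qed.

Lemma good_b m (S S' : 'I_m -> X * Y) c r d (b : R) (t0 : Theta) :
  0 < r -> 2 * c <= r -> 2 * r <= d -> risk_set h L D d `<=` A ->
  (forall th, `|Rk th - emp S th| <= c) ->
  (forall th, `|emp S th - emp S' th| <= c) ->
  (forall th, b <= emp S th) ->
  erm_set h L S' r%:E `&` A !=set0.
Proof.
move=> Hr Hcr Hrd HA Hd Hb Hlb.
have Hr4 : 0 < r / 4 by rewrite divr_gt0.
have [t1 Ht1] := @near_min _ _ _ _ t0 _ Hlb Hr4.
have Hlb' : forall th, b - c <= emp S' th.
  move=> th; have := Hb th; have := Hlb th; rewrite ler_norml => ? /andP[? ?]; lra.
have [t2 Ht2] := @near_min _ _ _ _ t0 _ Hlb' Hr4.
have [Hcase|Hcase] := pselect (forall th', emp S' t1 - r <= emp S' th').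
  exists t1; split; first exact: erm_mem.
  apply: HA; apply: rs_mem => // th'.
  have := Hd t1; have := Hd th'; have := Ht1 th'.
  rewrite !ler_norml => ? /andP[? ?] /andP[? ?]; lra.
move/existsNP: Hcase => [t3]; move/negP; rewrite -ltNge => H3.
exists t2; split.
  apply: erm_mem => th'; have := Ht2 th'; lra.
apply: HA; apply: rs_mem => // th'.
have := Hd t2; have := Hd th'; have := Ht1 th'; have := Ht2 t3.
have := Hb t2; have := Hb t1.
rewrite !ler_norml => /andP[? ?] /andP[? ?] ? ? /andP[? ?] /andP[? ?]; lra.
Qed.
End S2.
Lemma small_inv (R : realType) (e : R) : 0 < e -> exists n : nat, n.+1%:R^-1 < e.
Proof. move=> he; have [N _ HN] := near_infty_natSinv_lt (PosNum he). by exists N; apply: HN => /=. Qed.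

Lemma lee_lim (R : realType) (x : \bar R) (c : R) :
  (forall n : nat, (x <= (c + n.+1%:R^-1)%:E)%E) -> (x <= c%:E)%E.
Proof.
move=> H; apply/lee_addgt0Pr => e he.
have [n Hn] := small_inv he.
by apply: (le_trans (H n)); rewrite -EFinD lee_fin lerD2l ltW.
Qed.
Section S3.
Variables (R : realType) (dX dY : measure_display) (X : measurableType dX)
  (Y : measurableType dY) (Theta : Type) (h : X -> Theta -> Y) (L : Y -> Y -> R)
  (dO : measure_display) (Omega : measurableType dO) (P : probability Omega R)
  (D : probability (X * Y)%type R) (Z : nat -> Omega -> X * Y) (alpha : R).
Local Notation sw := (suc_witness h L P D Z).
Hypothesis Hmeas : forall (m : nat) (eps : R), (0 < m)%N -> 0 < eps ->
     measurable [set om | unif_dev h L D (sample Z m om) eps].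

Definition Ev m c := [set om | unif_dev h L D (sample Z m om) c].

Lemma wit_of_sucfun c (m : nat) :
  (suc_fun h L P D Z c alpha < (m.+1)%:R%:E)%E -> exists w, sw w /\ w c alpha <= m%:R.
Proof.
move/ereal_inf_lt => [_ [w Hw <-]]; rewrite lte_fin => Hlt.
exists w; split => //.
apply: (le_trans (ceil_ge _)).
move: Hlt; have E : forall n : nat, (n%:R : R) = (n%:Z)%:~R by [].
rewrite !E ltr_int ler_int; move: (Num.Def.ceil _) => k H; lia.
Qed.

Lemma ud_mono m (S : 'I_m -> X * Y) c1 c2 :
  unif_dev h L D S c1 -> c1 <= c2 -> unif_dev h L D S c2.
Proof. by rewrite /unif_dev => H1 H2; apply: (le_trans H1); rewrite lee_fin. Qed.

Lemma bd_mono m (S S' : 'I_m -> X * Y) c1 c2 :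
  boot_unif_dev h L S S' c1 -> c1 <= c2 -> boot_unif_dev h L S S' c2.
Proof. by rewrite /boot_unif_dev => H1 H2; apply: (le_trans H1); rewrite lee_fin. Qed.

Lemma bp_mono m (Q1 Q2 : {ffun 'I_m -> 'I_m} -> Prop) :
  (forall i, Q1 i -> Q2 i) -> boot_prob R Q1 <= boot_prob R Q2.
Proof.
move=> H; rewrite /boot_prob; apply: ler_wpM2r; first by rewrite invr_ge0 ler0n.
rewrite ler_nat; apply: subset_leq_card; apply/fintype.subsetP => i.
by rewrite !inE => /asboolP Hq; apply/asboolP; apply: H.
Qed.

Lemma Ev_cap m c : Ev m c = \bigcap_n Ev m (c + n.+1%:R^-1).
Proof.
apply/seteqP; split => om /=.
  by move=> H n _; apply: (ud_mono H); rewrite lerDl invr_ge0 ler0n.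
by move=> H; apply: lee_lim => n; apply: H.
Qed.

Lemma Ev_meas m c : (0 < m)%N -> 0 <= c -> measurable (Ev m c).
Proof.
move=> m0 c0; rewrite Ev_cap; apply: bigcapT_measurable => n.
by apply: Hmeas => //; apply: ltr_wpDl => //; rewrite invr_gt0 ltr0n.
Qed.

Lemma goodP_lim m c : (0 < m)%N -> 0 <= c ->
  (forall c', c < c' -> ((1 - alpha)%:E <= P (Ev m c'))%E) ->
  ((1 - alpha)%:E <= P (Ev m c))%E.
Proof.
move=> m0 c0 H.
have Fm : forall n : nat, measurable (Ev m (c + n.+1%:R^-1)).
  move=> n; apply: Ev_meas => //; apply: addr_ge0 => //; rewrite invr_ge0 ler0n.
have Hmono : {homo (fun n => Ev m (c + n.+1%:R^-1)) : n k / (n <= k)%N >-> (k <= n)%O}.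
  move=> n k nk; apply/subsetPset => om /= Hom; apply: (ud_mono Hom).
  by rewrite lerD2l lef_pV2 ?posrE ?ltr0n // ler_nat.
have Hcvg := @nonincreasing_cvg_mu _ _ _ P (fun n => Ev m (c + n.+1%:R^-1))
  (le_lt_trans (probability_le1 P (Fm 0%N)) (ltey _)) Fm (bigcapT_measurable Fm) Hmono.
rewrite Ev_cap -(cvg_lim _ Hcvg) //.
apply: lime_ge; first exact: (cvgP _ Hcvg).
by apply: nearW => n /=; apply: H; rewrite ltrDl invr_gt0 ltr0n.
Qed.

Lemma goodB_lim m (S : 'I_m -> X * Y) c :
  (forall c', c < c' -> 1 - alpha <=
     boot_prob R (fun idx => boot_unif_dev h L S (resample S idx) c')) ->
  1 - alpha <= boot_prob R (fun idx => boot_unif_dev h L S (resample S idx) c).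
Proof.
move=> H.
pose G c' := [set idx : {ffun 'I_m -> 'I_m} |
               `[< boot_unif_dev h L S (resample S idx) c' >] ].
have GP : forall c1 c2, c1 <= c2 -> G c1 \subset G c2.
  move=> c1 c2 c12; apply/fintype.subsetP => i; rewrite !inE.
  by move=> /asboolP Hi; apply/asboolP; apply: bd_mono Hi c12.
have exP : exists k, `[< exists c', c < c' /\ #|G c'| = k >].
  by exists #|G (c + 1)|; apply/asboolP; exists (c + 1); split => //; rewrite ltrDl.
case: (ex_minnP exP) => k0 /asboolP [c0 [Hc0 Hk0]] Hmin.
have Hsub : forall idx, boot_unif_dev h L S (resample S idx) c0 ->
    boot_unif_dev h L S (resample S idx) c.
  move=> idx Hidx; apply: lee_lim => n.
  pose c'' := Num.min c0 (c + n.+1%:R^-1).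
  have Hc'' : c < c''.
    by rewrite lt_min Hc0 ltrDl invr_gt0 ltr0n.
  have H1 : G c'' \subset G c0 by apply: GP; rewrite ge_min lexx.
  have H2 : (k0 <= #|G c''|)%N by apply: Hmin; apply/asboolP; exists c''.
  have Ec : #|G c''| = #|G c0|.
    by apply/eqP; rewrite eqn_leq (subset_leq_card H1) Hk0 H2.
  have E := subset_cardP Ec H1.
  have : idx \in G c'' by rewrite E inE; apply/asboolP.
  rewrite inE => /asboolP Hi; apply: (le_trans Hi); rewrite lee_fin.
  by rewrite ge_min lexx orbT.
apply: (le_trans (H _ Hc0)); apply: bp_mono; exact: Hsub.
Qed.
End S3.
Section S4.
Variables (R : realType) (dX dY : measure_display) (X : measurableType dX)
  (Y : measurableType dY) (Theta : Type) (h : X -> Theta -> Y) (L : Y -> Y -> R)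
  (dO : measure_display) (Omega : measurableType dO) (P : probability Omega R)
  (D : probability (X * Y)%type R) (Z : nat -> Omega -> X * Y) (alpha : R).
Local Notation sw := (suc_witness h L P D Z).
Local Notation emp := (emp_risk h L).
Hypothesis Hmeas : forall (m : nat) (eps : R), (0 < m)%N -> 0 < eps ->
     measurable [set om | unif_dev h L D (sample Z m om) eps].
Hypothesis Halpha : 0 < alpha.

Lemma below_a m r c' : eps_a h L P D Z m alpha = r%:E -> r / 2 < c' ->
  exists x w, [/\ 0 < x, x <= c', sw w & w x alpha <= m%:R].
Proof.
move=> Er Hc.
have : (eps_a h L P D Z m alpha < (2 * c')%:E)%E by rewrite Er lte_fin; lra.
rewrite /eps_a => /ereal_inf_lt [_ [e [He0 He] <-]]; rewrite lte_fin => Hlt.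
have Hlt2 : ((m%:R : R)%:E < ((m.+1)%:R : R)%:E)%E by rewrite lte_fin ltr_nat.
have [w [Hw Hwm]] := @wit_of_sucfun _ _ _ _ _ _ h L _ _ P D Z alpha (e / 2) m
   (le_lt_trans He Hlt2).
exists (e / 2), w; split => //; [by rewrite divr_gt0 | lra].
Qed.

Lemma below_b m r c' : eps_b h L P D Z m alpha = r%:E -> r / 2 < c' ->
  exists x w, [/\ 0 < x, x <= c', sw w & w x alpha <= m%:R].
Proof.
move=> Er Hc.
have : (eps_b h L P D Z m alpha < (2 * c')%:E)%E by rewrite Er lte_fin; lra.
rewrite /eps_b => /ereal_inf_lt [_ [e [He0 He] <-]]; rewrite lte_fin => Hlt.
have Hlt2 : ((m%:R : R)%:E < ((m.+1)%:R : R)%:E)%E by rewrite lte_fin ltr_nat.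
move: (le_lt_trans He Hlt2) => /ereal_inf_lt [_ [d /andP[d0 de] <-]] Hd.
have [w [Hw Hwm]] := @wit_of_sucfun _ _ _ _ _ _ h L _ _ P D Z alpha ((e - d) / 2) m Hd.
exists ((e - d) / 2), w; split => //; [by rewrite divr_gt0 // subr_gt0 | lra].
Qed.

Lemma goods m r : (0 < m)%N -> 0 <= r ->
  (forall c', r / 2 < c' -> exists x w, [/\ 0 < x, x <= c', sw w & w x alpha <= m%:R]) ->
  ((1 - alpha)%:E <= P (Ev h L D Z m (r / 2)))%E /\
  forall m' (S : 'I_m' -> X * Y), (m <= m')%N ->
    1 - alpha <= boot_prob R (fun idx => boot_unif_dev h L S (resample S idx) (r / 2)).
Proof.
move=> Hm Hr Hb; split.
  apply: goodP_lim => //; first by rewrite divr_ge0.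
  move=> c' Hc'; have [x [w [x0 xc Hw Hwm]]] := Hb c' Hc'.
  have [HP _] := Hw x alpha x0 Halpha m Hm Hwm.
  apply: (le_trans HP); apply: le_measure; rewrite ?inE.
  - by apply: Ev_meas => //; rewrite ltW.
  - by apply: Ev_meas => //; rewrite ltW // (lt_le_trans x0 xc).
  - by move=> om /= H; apply: ud_mono H xc.
move=> m' S mm'; apply: goodB_lim => c' Hc'.
have [x [w [x0 xc Hw Hwm]]] := Hb c' Hc'.
have Hmm : (m%:R : R) <= m'%:R by rewrite ler_nat.
have [_ HB] := Hw x alpha x0 Halpha m' (leq_trans Hm mm') (le_trans Hwm Hmm).
apply: (le_trans (HB S)); apply: bp_mono => i Hi; exact: bd_mono Hi xc.
Qed.
End S4.
Lemma fin_of (R : realType) (e : \bar R) (thr : R) :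
  (0 <= e)%E -> (e <= thr%:E)%E -> [/\ e = (fine e)%:E, 0 <= fine e & fine e <= thr].
Proof.
move=> e0 et.
have Hfin : e \is a fin_num.
  by rewrite fin_numE; apply/andP; split; apply/eqP => He; rewrite He in e0 et.
by split; rewrite ?fineK // -lee_fin fineK.
Qed.

Section S5.
Variables (R : realType) (dX dY : measure_display) (X : measurableType dX)
  (Y : measurableType dY) (Theta : Type) (h : X -> Theta -> Y) (L : Y -> Y -> R)
  (dO : measure_display) (Omega : measurableType dO) (P : probability Omega R)
  (D : probability (X * Y)%type R) (Z : nat -> Omega -> X * Y) (alpha : R)
  (A : set Theta) (delta : R).
Local Notation sw := (suc_witness h L P D Z).
Local Notation emp := (emp_risk h L).
Hypothesis Hmeas : forall (m : nat) (eps : R), (0 < m)%N -> 0 < eps ->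
     measurable [set om | unif_dev h L D (sample Z m om) eps].
Hypothesis Halpha : 0 < alpha.
Hypothesis Hf : forall t, risk h L D t \is a fin_num.
Hypothesis HA : risk_set h L D delta `<=` A.

Lemma eps_a_ge0 m : (0 <= eps_a h L P D Z m alpha)%E.
Proof. by apply/ereal_infP => _ [e [He0 _] <-]; rewrite lee_fin ltW. Qed.

Lemma eps_b_ge0 m : (0 <= eps_b h L P D Z m alpha)%E.
Proof. by apply/ereal_infP => _ [e [He0 _] <-]; rewrite lee_fin ltW. Qed.

Lemma main_a m : (0 < m)%N -> (eps_a h L P D Z m alpha <= delta%:E)%E ->
  (forall (m : nat) (S : 'I_m -> X * Y),
      exists thS : Theta, forall th, emp_risk h L S thS <= emp_risk h L S th) ->
  pl_well_defined h L Z (fun m => eps_a h L P D Z m alpha) A alpha ->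
  ((1 - alpha)%:E <= P (pl_event h L Z m (eps_a h L P D Z m alpha) A alpha))%E.
Proof.
move=> Hm Hle Herm Hwd.
have [Ee r0 rd] := fin_of (eps_a_ge0 m) Hle.
set r := fine _ in Ee r0 rd.
have [HP HB] := goods Hmeas Halpha Hm r0 (fun c' => below_a Ee).
have [Hex Hpm] := Hwd m Hm.
have Hsub : Ev h L D Z m (r / 2) `<=` pl_event h L Z m (eps_a h L P D Z m alpha) A alpha.
  move=> om Hom; rewrite /pl_event /= Ee.
  set S := sample Z m om.
  apply: (@pl_core _ _ _ _ _ _ h L m S r%:E A alpha
            (fun idx => boot_unif_dev h L S (resample S idx) (r / 2))).
  - by have := Hex S; rewrite /= Ee.
  - move=> idx Hidx; have [thS HthS] := Herm m S.
    apply: (@good_a _ _ _ _ _ _ h L D A Hf m S _ (r / 2) r delta thS) => //.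
    + lra.
    + exact: (@devP _ _ _ _ _ _ h L D m S (r / 2) Hf).1 Hom.
    + exact: (@bdevP _ _ _ _ _ _ h L m S (resample S idx) (r / 2)).1 Hidx.
  - exact: HB m S (leqnn m).
apply: (le_trans HP); apply: le_measure.
- by rewrite inE; apply: Ev_meas => //; rewrite divr_ge0.
- by rewrite inE; exact: Hpm.
- exact: Hsub.
Qed.
End S5.
Section AC.
Local Open Scope nat_scope.
Local Open Scope set_scope.

Lemma card_lt_ord n k : k <= n -> #|[pred x : 'I_n | x < k]| = k.
Proof.
move=> kn; rewrite -sum1_card.
transitivity (\sum_(i < k | true) 1); last by rewrite sum1_card card_ord.
rewrite (big_ord_widen_cond n (fun _ => true) (fun _ => 1) kn) /=.
by apply: eq_bigl => i; rewrite inE.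
Qed.

Lemma foldr_const_card (T : finType) (g : T -> nat) k (s : seq T) :
  (forall x, g x = k) -> foldr muln 1 [seq g x | x <- s] = k ^ size s.
Proof. by move=> H; elim: s => [|x s IH] //=; rewrite IH H expnS. Qed.

Lemma count_half k :
  #|[pred f : {ffun 'I_(k + k) -> 'I_(k + k)} | #|[set i | f i < k]| == k]|
  = 'C(k + k, k) * k ^ (k + k).
Proof.
set n := k + k.
pose p (f : {ffun 'I_n -> 'I_n}) := [set i | f i < k].
have Hk : k <= n by rewrite leq_addl.
have inner : forall T : {set 'I_n}, #|[pred f | p f == T]| = k ^ n.
  move=> T.
  pose F := fun i : 'I_n => if i \in T then [pred x : 'I_n | x < k]
                              else [pred x : 'I_n | ~~ (x < k)].
  have -> : #|[pred f | p f == T]| = #|family F|.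
    apply: eq_card => f; rewrite !inE.
    apply/eqP/familyP => [E i | H].
      by rewrite /F -E /p inE; case Hfi: (f i < k); rewrite inE Hfi.
    apply/finset.setP => i; rewrite inE; have := H i; rewrite /F.
    by case: (i \in T); rewrite inE; case: (f i < k).
  rewrite card_family (@foldr_const_card _ _ k) ?size_enum_ord //.
  move=> i; rewrite /F; case: (i \in T); first exact: card_lt_ord.
  have := cardC [pred x : 'I_n | x < k]; rewrite card_ord card_lt_ord //.
  have E : #|[predC [pred x : 'I_n | x < k]]| = #|[pred x : 'I_n | ~~ (x < k)]|.
    by apply: eq_card => x; rewrite !inE.
  by rewrite E /n => /eqP; rewrite eqn_add2l => /eqP.
rewrite -sum1_card.
rewrite (partition_big p (fun T => #|T| == k)) /=; last by move=> f; rewrite inE.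
rewrite (eq_bigr (fun _ => k ^ n)); last first.
  move=> T /eqP HT; rewrite -(inner T) -sum1_card; apply: eq_bigl => f.
  rewrite !inE; apply/andP/idP => [[] //|/eqP E].
  by split; [rewrite -/(p f) E HT | exact/eqP].
rewrite (eq_bigl (fun T => T \in [set T : {set 'I_n} | #|T| == k])); last first.
  by move=> T; rewrite inE.
by rewrite sum_nat_const card_draws card_ord.
Qed.
End AC.
Section AC2.
Local Open Scope nat_scope.
Lemma binom_rec k : k.+1 * 'C(k.+1 + k.+1, k.+1) = 2 * (k + k).+1 * 'C(k + k, k).
Proof.
have E1 := mul_bin_diag (k + k).+2 k.
have E2 := mul_bin_diag (k + k).+1 k.
have E3 : 'C((k + k).+1, k.+1) = 'C((k + k).+1, k).
  rewrite -[in RHS]bin_sub; last by rewrite leqW // leq_addr.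
  by congr binomial; lia.
rewrite /= in E1 E2.
have -> : k.+1 + k.+1 = (k + k).+2 by rewrite addSn addnS.
apply/eqP; rewrite -(eqn_pmul2l (ltn0Sn k)).
rewrite -E1 -E3 mulnCA -E2; apply/eqP.
set C := 'C(k + k, k); nia.
Qed.

Lemma binom_bound k : (k + k).+1 * 'C(k + k, k) ^ 2 <= 16 ^ k.
Proof.
elim: k => [|k IH]; first by rewrite bin0.
have R := binom_rec k.
rewrite -(@leq_pmul2l (k.+1 ^ 2)) ?expn_gt0 //.
have -> : k.+1 ^ 2 * ((k.+1 + k.+1).+1 * 'C(k.+1 + k.+1, k.+1) ^ 2)
        = (k.+1 + k.+1).+1 * (k.+1 * 'C(k.+1 + k.+1, k.+1)) ^ 2.
  by rewrite !expnMn; lia.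
rewrite R [16 ^ k.+1]expnS.
move: IH; set C := 'C(k + k, k); set M := 16 ^ k => IH.
have H2 : (k.+1 + k.+1).+1 * (2 * (k + k).+1 * C) ^ 2
          = 4 * (2 * k + 3) * ((k + k).+1 * C ^ 2) * (2 * k + 1) by lia.
rewrite H2.
apply: (@leq_trans (4 * (2 * k + 3) * M * (2 * k + 1))).
  exact: leq_mul (leq_mul (leqnn _) IH) (leqnn _).
rewrite -/M; nia.
Qed.
End AC2.
Section AC3.
Variable R : realType.
Local Notation "'CC' k" := ('C(k + k, k))%N (at level 10).

Lemma ratio_eq k : (0 < k)%N ->
  (((CC k * k ^ (k + k))%N)%:R / (((k + k) ^ (k + k))%N)%:R : R)
  = (CC k)%:R / ((4 ^ k)%N)%:R.
Proof.
move=> k0.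
have E : ((k + k) ^ (k + k) = 4 ^ k * k ^ (k + k))%N.
  by rewrite {1}addnn -mul2n expnMn [(2 ^ _)%N]expnD -expnMn.
rewrite E !natrM invfM mulrACA mulfV ?mulr1 //.
by rewrite pnatr_eq0 -lt0n expn_gt0 k0.
Qed.

Lemma ac_small (a : R) (m : nat) : 0 < a ->
  exists k, [/\ (m <= k)%N, (0 < k)%N & ((CC k)%:R / ((4 ^ k)%N)%:R : R) < a].
Proof.
move=> a0.
have [n Hn] := small_inv (mulr_gt0 a0 a0).
exists (maxn (maxn m 1) n); set k := maxn _ _.
have mk : (m <= k)%N by rewrite /k !leq_max leqnn.
have k0 : (0 < k)%N by rewrite /k !leq_max orbT.
have nk : (n <= k)%N by rewrite /k leq_max leqnn orbT.
split => //.
rewrite ltNge; apply/negP => Ha.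
have HB := binom_bound k.
set C := CC k in Ha HB.
have H4 : (0 : R) < ((4 ^ k)%N)%:R by rewrite ltr0n expn_gt0.
set rho := C%:R / _ in Ha.
have Hrho2 : rho * rho * ((k + k).+1)%N%:R <= 1.
  rewrite /rho -ler_pdivlMr; last by rewrite ltr0n.
  rewrite mul1r mulrACA -invfM -!natrM.
  rewrite ler_pdivrMr; last by rewrite ltr0n muln_gt0 !expn_gt0.
  rewrite ler_pdivlMl ?ltr0n // -natrM ler_nat.
  by rewrite -expnMn mulnn; exact: HB.
have Ha2 : a * a <= rho * rho by rewrite ler_pM // ltW.
have Hn2 : (n.+1%:R : R) <= ((k + k).+1)%N%:R.
  by rewrite ler_nat ltnS (leq_trans nk) // leq_addr.
have : 1 < a * a * n.+1%:R.
  by rewrite -ltr_pdivrMr ?ltr0n // mul1r.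
have : a * a * n.+1%:R <= rho * rho * ((k + k).+1)%N%:R.
  by rewrite ler_pM // ?ler0n // mulr_ge0 // ltW.
move: Hrho2; lra.
Qed.
End AC3.
Lemma sum_if (R : realType) n (P : pred 'I_n) (a b : R) :
  \sum_(i < n) (if P i then a else b) = #|P|%:R * a + (n - #|P|)%:R * b.
Proof.
rewrite (bigID P) /=.
have E1 : \sum_(i < n | P i) (if P i then a else b) = #|P|%:R * a.
  transitivity (\sum_(i in P) a); first by apply: eq_big => // i ->.
  by rewrite sumr_const mulr_natl.
have E2 : \sum_(i < n | ~~ P i) (if P i then a else b) = (n - #|P|)%:R * b.
  transitivity (\sum_(i in [predC P]) b).
    by apply: eq_big => [i|i Hi]; [rewrite !inE | rewrite (negbTE Hi)].
  rewrite sumr_const mulr_natl; congr (_ *+ _).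
  have HC := cardC P; rewrite card_ord in HC.
  have Hle : (#|P| <= n)%N by rewrite -[X in (_ <= X)%N]card_ord max_card.
  by apply/eqP; rewrite -(eqn_add2l #|P|) HC subnKC.
by rewrite E1 E2.
Qed.

Section S6.
Variables (R : realType) (dX dY : measure_display) (X : measurableType dX)
  (Y : measurableType dY) (Theta : Type) (h : X -> Theta -> Y) (L : Y -> Y -> R).
Local Notation emp := (emp_risk h L).
Local Notation ell z th := (L (h z.1 th) z.2).

Lemma emp_all m (S : 'I_m -> X * Y) z th : (0 < m)%N ->
  (forall i, ell (S i) th = ell z th) -> emp S th = ell z th.
Proof.
move=> m0 H; rewrite /emp_risk (eq_bigr (fun _ => ell z th)) //.
rewrite sumr_const card_ord -[X in _ * X]mulr_natl mulrA mulVf ?mul1r //.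
by rewrite pnatr_eq0 -lt0n.
Qed.

Lemma indep m (alpha : R) : alpha < 1 ->
  (forall m' (S : 'I_m' -> X * Y), (m <= m')%N ->
     1 - alpha <= boot_prob R (fun idx => boot_unif_dev h L S (resample S idx) 0)) ->
  forall z1 z2 th, ell z1 th = ell z2 th.
Proof.
move=> a1 HB z1 z2 th; apply/eqP/negPn/negP => Hne.
have a0 : 0 < 1 - alpha by rewrite subr_gt0.
have [k [mk k0 Hk]] := ac_small m a0.
pose n := (k + k)%N.
pose S := fun i : 'I_n => if (i < k)%N then z1 else z2.
set a := ell z1 th; set b := ell z2 th.
have Hn0 : (n%:R : R) != 0 by rewrite pnatr_eq0 -lt0n addn_gt0 k0.
have Hsub : forall f : {ffun 'I_n -> 'I_n},
    boot_unif_dev h L S (resample S f) 0 -> #|[pred i | (f i < k)%N]| = k.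
  move=> f /bdevP /(_ th); rewrite normr_le0 subr_eq0 => /eqP E.
  have E1 : \sum_(i < n) ell (S i) th = k%:R * a + (n - k)%:R * b.
    rewrite -(card_lt_ord (leq_addr k k)) -sum_if.
    by apply: eq_bigr => i _; rewrite /S inE; case: (i < k)%N.
  have E2 : \sum_(i < n) ell (S (f i)) th =
      #|[pred i | (f i < k)%N]|%:R * a + (n - #|[pred i | (f i < k)%N]|)%:R * b.
    rewrite -sum_if.
    by apply: eq_bigr => i _; rewrite /S inE; case: (f i < k)%N.
  move: E; rewrite /emp_risk /resample E1 E2.
  move/(congr1 (fun x => n%:R * x)); rewrite !mulrA mulfV // !mul1r.
  set N := #|_|.
  have HN : (N <= n)%N by rewrite -[X in (_ <= X)%N]card_ord max_card.
  rewrite !natrB ?leq_addr // => E.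
  have : (k%:R - N%:R) * (a - b) = 0 :> R by move: E; rewrite /n natrD; lra.
  move/eqP; have Hne' : a != b := Hne.
  rewrite mulf_eq0 !subr_eq0 (negbTE Hne') orbF eqr_nat => /eqP ->.
  by [].
have Hc : forall f : {ffun 'I_n -> 'I_n},
    #|[set i | (f i < k)%N]|%SET = #|[pred i | (f i < k)%N]|.
  by move=> f; apply: eq_card => i; rewrite !inE.
have Hbp : boot_prob R (fun f : {ffun 'I_n -> 'I_n} => #|[pred i | (f i < k)%N]| = k)
    = 'C(k + k, k)%:R / (4 ^ k)%:R.
  rewrite /boot_prob card_ffun card_ord -(@ratio_eq R k k0) -count_half.
  congr (_%:R / _%:R); apply: eq_card => f; rewrite !inE Hc.
  by apply/idP/idP => [/set_mem/asboolP -> //| /eqP H]; exact/mem_set/asboolP.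
have := HB n S (leq_trans mk (leq_addr k k)).
have := @bp_mono R _ _ _ Hsub; rewrite Hbp => H1 H2.
by have := lt_le_trans Hk (le_trans H2 H1); rewrite ltxx.
Qed.
End S6.
Section S7.
Variables (R : realType) (dX dY : measure_display) (X : measurableType dX)
  (Y : measurableType dY) (Theta : Type) (h : X -> Theta -> Y) (L : Y -> Y -> R)
  (dO : measure_display) (Omega : measurableType dO) (P : probability Omega R)
  (D : probability (X * Y)%type R) (Z : nat -> Omega -> X * Y) (alpha : R)
  (A : set Theta) (delta : R).
Local Notation emp := (emp_risk h L).
Local Notation ell z th := (L (h z.1 th) z.2).
Hypothesis Hmeas : forall (m : nat) (eps : R), (0 < m)%N -> 0 < eps ->
     measurable [set om | unif_dev h L D (sample Z m om) eps].
Hypothesis Halpha : 0 < alpha.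
Hypothesis Hf : forall t, risk h L D t \is a fin_num.
Hypothesis HA : risk_set h L D delta `<=` A.

Lemma risk_const (z : X * Y) th : (forall z1 z2 th, ell z1 th = ell z2 th) ->
  risk h L D th = (ell z th)%:E.
Proof.
move=> Hind; rewrite /risk.
have -> : (fun z' : X * Y => (ell z' th)%:E) = cst (ell z th)%:E.
  by apply: funext => z'; rewrite /= (Hind z' z).
rewrite integral_cst // -[RHS]mule1; congr (_ * _)%E; exact: probability_setT.
Qed.

Lemma boot_prob_all m : boot_prob R (fun _ : {ffun 'I_m -> 'I_m} => True) = 1.
Proof.
rewrite /boot_prob.
have -> : #|[set idx : {ffun 'I_m -> 'I_m} | `[< True >] ]| = #|{ffun 'I_m -> 'I_m}|.
  by apply: eq_card => f; apply/mem_set/asboolP.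
by rewrite divff // pnatr_eq0 -lt0n; apply/card_gt0P; exists [ffun i => i].
Qed.

Lemma main_b m : (0 < m)%N -> 0 < delta ->
  (eps_b h L P D Z m alpha <= (delta / 2)%:E)%E ->
  pl_well_defined h L Z (fun m => eps_b h L P D Z m alpha) A alpha ->
  ((1 - alpha)%:E <= P (pl_event h L Z m (eps_b h L P D Z m alpha) A alpha))%E.
Proof.
move=> Hm Hd Hle Hwd.
have [Ee r0 rd] := fin_of (eps_b_ge0 h L P D Z alpha m) Hle.
set r := fine _ in Ee r0 rd.
have [Hex Hpm] := Hwd m Hm.
case: (lerP 1 alpha) => [a1|a1].
  by apply: (le_trans _ (measure_ge0 P _)); rewrite lee_fin subr_le0.
have [HP HB] := goods Hmeas Halpha Hm r0 (fun c' => below_b Ee).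
have [rpos|rle0] := ltrP 0 r.
  have Hz : forall z : X * Y, exists b, forall th, b <= ell z th.
    move=> z; have [idx [t Ht]] := Hex (fun _ : 'I_m => z); rewrite /= Ee in Ht.
    have Hl := erm_lb Ht.
    exists (ell z t - r) => th'; have := Hl th'.
    by rewrite !(@emp_all _ _ _ _ _ _ h L m _ z) //.
  have [fb Hfb] := choice Hz.
  have Hsub : Ev h L D Z m (r / 2) `<=` pl_event h L Z m (eps_b h L P D Z m alpha) A alpha.
    move=> om Hom; rewrite /pl_event /= Ee.
    set S := sample Z m om.
    have [i0 [t0 _]] := Hex S.
    apply: (@pl_core _ _ _ _ _ _ h L m S r%:E A alpha
              (fun idx => boot_unif_dev h L S (resample S idx) (r / 2))).
    - by have := Hex S; rewrite /= Ee.
    - move=> idx Hidx.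
      apply: (@good_b _ _ _ _ _ _ h L D A Hf m S _ (r / 2) r delta
                (m%:R^-1 * \sum_(i < m) fb (S i)) t0) => //.
      + lra.
      + lra.
      + exact: (@devP _ _ _ _ _ _ h L D m S (r / 2) Hf).1 Hom.
      + exact: (@bdevP _ _ _ _ _ _ h L m S (resample S idx) (r / 2)).1 Hidx.
      + move=> th; rewrite /emp_risk; apply: ler_wpM2l; first by rewrite invr_ge0 ler0n.
        by apply: ler_sum => i _; apply: Hfb.
    - exact: HB m S (leqnn m).
  apply: (le_trans HP); apply: le_measure.
  - by rewrite inE; apply: Ev_meas => //; rewrite divr_ge0.
  - by rewrite inE; exact: Hpm.
  - exact: Hsub.
have r00 : r = 0 by apply/eqP; rewrite eq_le rle0 r0.
have HB' : forall m' (S : 'I_m' -> X * Y), (m <= m')%N ->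
    1 - alpha <= boot_prob R (fun idx => boot_unif_dev h L S (resample S idx) 0).
  by move=> m' S mm'; have := HB m' S mm'; rewrite r00 mul0r.
have Hind := indep a1 HB'.
have Hsub : setT `<=` pl_event h L Z m (eps_b h L P D Z m alpha) A alpha.
  move=> om _; rewrite /pl_event /= Ee r00.
  set S := sample Z m om.
  pose z := S (Ordinal Hm).
  have Eall : forall (S' : 'I_m -> X * Y) th, emp S' th = ell z th.
    by move=> S' th; apply: emp_all => // i; apply: Hind.
  apply: (@pl_core _ _ _ _ _ _ h L m S 0%:E A alpha (fun _ => True)).
  - by have := Hex S; rewrite /= Ee r00.
  - move=> idx _.
    have [i0 [t Ht]] := Hex S; rewrite /= Ee r00 in Ht.
    have Hl := erm_lb Ht.
    exists t; split.
      by apply: erm_mem => th'; have := Hl th'; rewrite !Eall.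
    apply: HA; apply: rs_mem => // th'.
    rewrite !(risk_const z) //=; have := Hl th'; rewrite !Eall; lra.
  - by rewrite boot_prob_all lerBlDr lerDl ltW.
apply: (@le_trans _ _ (P setT)).
  by rewrite probability_setT lee_fin lerBlDr lerDl ltW.
apply: le_measure => //; rewrite inE //; exact: Hpm.
Qed.
End S7.
Lemma liminf_ev (R : realType) (u : nat -> \bar R) (x : \bar R) (M : nat) :
  (forall n, (M <= n)%N -> (x <= u n)%E) -> (x <= limn_einf u)%E.
Proof.
move=> H; rewrite limn_einf_lim; apply: lime_ge; first exact: is_cvg_einfs.
exists M => // n /= Hn.
by apply/ereal_infP => _ [k /= Hk <-]; apply: H; apply: leq_trans Hn Hk.
Qed.

Lemma ceil_bound (R : realType) (y : R) :
  exists M : nat, forall m : nat, (M <= m)%N -> ((Num.ceil y)%:~R : R) <= m%:R.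
Proof.
exists `|Num.ceil y|%N => m Hm.
have E : forall n : nat, (n%:R : R) = (n%:Z)%:~R by [].
rewrite E ler_int; move: (Num.ceil y) Hm => c Hm; lia.
Qed.

Unset Implicit Arguments.

Theorem theorem4 (R : realType) (dX dY dO : measure_display)
  (X : measurableType dX) (Y : measurableType dY) (Theta : topologicalType)
  (h : X -> Theta -> Y) (L : Y -> Y -> R)
  (Omega : measurableType dO) (P : probability Omega R)
  (D : probability (X * Y)%type R) (Z : nat -> Omega -> X * Y)
  (A : set Theta) (delta alpha : R) :
  iid_seq P D Z ->
  (forall th : Theta, D.-integrable setT (fun z => (L (h z.1 th) z.2)%:E)) ->
  (forall (m : nat) (eps : R), (0 < m)%N -> 0 < eps ->
     measurable [set om | unif_dev h L D (sample Z m om) eps]) ->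
  borel_set A ->
  0 < delta ->
  risk_set h L D delta `<=` A ->
  strong_unif_conv h L P D Z ->
  0 < alpha ->
  (* case (a) *)
  ((exists th0 : Theta, forall th, (risk h L D th0 <= risk h L D th)%E) ->
   (forall (m : nat) (S : 'I_m -> X * Y),
      exists thS : Theta, forall th, emp_risk h L S thS <= emp_risk h L S th) ->
   pl_well_defined h L Z (fun m => eps_a h L P D Z m alpha) A alpha ->
   pl_conclusion h L P Z (fun m => eps_a h L P D Z m alpha) delta A alpha)
  /\
  (* case (b) *)
  (pl_well_defined h L Z (fun m => eps_b h L P D Z m alpha) A alpha ->
   pl_conclusion h L P Z (fun m => eps_b h L P D Z m alpha) (delta / 2) A alpha).
Proof.
move=> _ Hint Hmeas _ Hd HA [w Hw] Ha.
have Hf : forall t, risk h L D t \is a fin_num.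
  by move=> t; apply: integrable_fin_num => //; exact: Hint.
have sfle : forall x (m : nat), ((Num.ceil (w x alpha))%:~R : R) <= m%:R ->
    (suc_fun h L P D Z x alpha <= (m%:R)%:E)%E.
  move=> x m Hx; apply: ge_ereal_inf; exists ((Num.ceil (w x alpha))%:~R)%:E.
    by exists w.
  by rewrite lee_fin.
split.
  move=> _ Herm Hwd; split.
    have [M HM] := ceil_bound (w (delta / 2) alpha).
    apply: (@liminf_ev _ _ _ (maxn M 1)) => n Hn.
    have Hn1 : (0 < n)%N by apply: leq_trans Hn; rewrite leq_max leqnn orbT.
    have HnM : (M <= n)%N by apply: leq_trans Hn; rewrite leq_max leqnn.
    apply: (@main_a R dX dY X Y Theta h L dO Omega P D Z alpha A delta) => //.
    apply: ge_ereal_inf; exists delta%:E => //; exists delta => //; split => //.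
    exact: sfle (HM _ HnM).
  move=> m Hm Hle.
  exact: (@main_a R dX dY X Y Theta h L dO Omega P D Z alpha A delta).
move=> Hwd; split.
  pose x := (delta / 2 - delta / 4) / 2.
  have [M HM] := ceil_bound (w x alpha).
  apply: (@liminf_ev _ _ _ (maxn M 1)) => n Hn.
  have Hn1 : (0 < n)%N by apply: leq_trans Hn; rewrite leq_max leqnn orbT.
  have HnM : (M <= n)%N by apply: leq_trans Hn; rewrite leq_max leqnn.
  apply: (@main_b R dX dY X Y Theta h L dO Omega P D Z alpha A delta) => //.
  apply: ge_ereal_inf; exists (delta / 2)%:E => //; exists (delta / 2) => //.
  split; first by rewrite divr_gt0.
  apply: ge_ereal_inf; exists (suc_fun h L P D Z x alpha); last exact: sfle (HM _ HnM).
  exists (delta / 4) => //; apply/andP; split; first by rewrite divr_gt0.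
  lra.
move=> m Hm Hle.
exact: (@main_b R dX dY X Y Theta h L dO Omega P D Z alpha A delta).
Qed.
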